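(* (i) For every $K>0$ and every stable phase-locked steady state $\theta^*$ of the Kuramoto network with coupling strength $K$, one has $r_{\rm uni}(\theta^* )>0$. (ii) If $K\mapsto\theta^*(K)$, $K\in I$ ($I\subset(0,\infty)$ an open interval), is a continuously differentiable family of stable phase-locked steady states, then $K\mapsto r_{\rm uni}(\theta^*(K))$ is monotonically non-decreasing on $I$, and if $\omega\neq 0$ it is strictly increasing, with $\frac{d r_{\rm uni}(\theta^*(K))}{dK}>0$ for all $K\in I$.
   Context: Kuramoto network: $N\ge 2$ oscillators with phases $\theta_i(t)$ obeying $\frac{d\theta_i}{dt}=\omega_i+K\sum_{j=1}^N A_{i,j}\sin(\theta_j-\theta_i)$, where $\omega=(\omega_1,\dots,\omega_N)^T\in\mathbb{R}^N$ are natural frequencies with $\sum_{i=1}^N\omega_i=0$, $K>0$ is the coupling strength, and $A=(A_{i,j})$ is the symmetric adjacency matrix ($A_{i,j}=A_{j,i}\in\{0,1\}$, $A_{i,i}=0$) of a connected undirected graph; $k_i=\sum_j A_{i,j}$ is the degree of node $i$. A phase-locked steady state is a vector $\theta^*\in\mathbb{R}^N$ with $\omega_i+K\sum_j A_{i,j}\sin(\theta_j^*-\theta_i^* )=0$ for all $i$. Its Jacobian $J$ is the symmetric matrix with $J_{i,j}=KA_{i,j}\cos(\theta_i^*-\theta_j^* )$ for $i\neq j$ and $J_{i,i}=-K\sum_j A_{i,j}\cos(\theta_i^*-\theta_j^* )$; it always has eigenvalue $\lambda_1=0$ with eigenvector $(1,\dots,1)^T$. The state is called stable if all remaining eigenvalues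 $\lambda_2,\dots,\lambda_N$ of $J$ are strictly negative. The order parameter is $r_{\rm uni}=\frac{1}{\sum_i k_i}\sum_{i,j}A_{i,j}\langle\cos(\theta_i-\theta_j)\rangle_t$, which for a steady state equals $r_{\rm uni}(\theta^* )=\frac{1}{\sum_i k_i}\sum_{i,j}A_{i,j}\cos(\theta_i^*-\theta_j^* )$. *)

(* Defs.v *)
From Stdlib Require Import Reals Lra Lia List.
Open Scope R_scope.

(* Vectors in R^N are functions nat -> R, meaningful on indices 0..N-1;
   matrices are functions nat -> nat -> R. *)

Fixpoint sumN (N : nat) (f : nat -> R) : R :=
  match N with
  | O => 0
  | S n => sumN n f + f n
  end.

Definition adjacency (N : nat) (A : nat -> nat -> R) : Prop :=
  (forall i j, (i < N)%nat -> (j < N)%nat -> A i j = 0 \/ A i j = 1) /\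
  (forall i j, (i < N)%nat -> (j < N)%nat -> A i j = A j i) /\
  (forall i, (i < N)%nat -> A i i = 0).

Inductive reach (N : nat) (A : nat -> nat -> R) : nat -> nat -> Prop :=
  | reach_refl : forall i, reach N A i i
  | reach_step : forall i k j, (k < N)%nat -> A i k = 1 -> reach N A k j ->
                 reach N A i j.

Definition connected (N : nat) (A : nat -> nat -> R) : Prop :=
  forall i j, (i < N)%nat -> (j < N)%nat -> reach N A i j.

Definition degree (N : nat) (A : nat -> nat -> R) (i : nat) : R :=
  sumN N (fun j => A i j).

Definition steady_state (N : nat) (A : nat -> nat -> R) (omega : nat -> R)
  (K : R) (theta : nat -> R) : Prop :=
  forall i, (i < N)%nat ->
    omega i + K * sumN N (fun j => A i j * sin (theta j - theta i)) = 0.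

Definition jacobian (N : nat) (A : nat -> nat -> R) (K : R) (theta : nat -> R)
  (i j : nat) : R :=
  if Nat.eq_dec i j
  then - K * sumN N (fun l => A i l * cos (theta i - theta l))
  else K * A i j * cos (theta i - theta j).

Definition mat_vec (N : nat) (M : nat -> nat -> R) (v : nat -> R) (i : nat) : R :=
  sumN N (fun j => M i j * v j).

Definition eigenpair (N : nat) (M : nat -> nat -> R) (lambda : R) (v : nat -> R) : Prop :=
  (exists i, (i < N)%nat /\ v i <> 0) /\
  (forall i, (i < N)%nat -> mat_vec N M v i = lambda * v i).

Definition constant_vec (N : nat) (v : nat -> R) : Prop :=
  exists c, forall i, (i < N)%nat -> v i = c.

(* Stability: apart from the eigenvalue lambda_1 = 0 with eigenvector (1,...,1)
   (counted once), all eigenvalues of the (real symmetric) Jacobian are < 0.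
   Equivalently: every eigenvalue admitting an eigenvector that is not a
   multiple of (1,...,1) is strictly negative (this also excludes 0 having
   multiplicity >= 2). *)
Definition stable (N : nat) (A : nat -> nat -> R) (K : R) (theta : nat -> R) : Prop :=
  forall lambda v, eigenpair N (jacobian N A K theta) lambda v ->
    ~ constant_vec N v -> lambda < 0.

Definition stable_steady_state (N : nat) (A : nat -> nat -> R) (omega : nat -> R)
  (K : R) (theta : nat -> R) : Prop :=
  steady_state N A omega K theta /\ stable N A K theta.

Definition r_uni (N : nat) (A : nat -> nat -> R) (theta : nat -> R) : R :=
  / sumN N (fun i => degree N A i) *
  sumN N (fun i => sumN N (fun j => A i j * cos (theta i - theta j))).

Definition in_interval (lo : R) (hi : option R) (K : R) : Prop :=
  lo < K /\ match hi with Some h => K < h | None => True end.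

(* Main.v *)
Require Import Defs.
From Stdlib Require Import Reals Lra Lia List Classical.
Open Scope R_scope.

Module MC.
From mathcomp Require Import all_boot all_algebra.
From mathcomp Require Import all_classical all_reals all_analysis.
From mathcomp Require Import Rstruct Rstruct_topology.
Set Warnings "-all".
Import numFieldNormedType.Exports.

Section S.
Variable n : nat.
Definition tof (v : 'rV[R]_n.+1) : nat -> R := fun i => v ord0 (inord i).
Definition contf (h : (nat -> R) -> R) := continuous (fun v => h (tof v)).

Lemma contf_coord i : contf (fun x => x i).
Proof. by move=> v; apply: coord_continuous. Qed.
Lemma contf_cst c : contf (fun _ => c).
Proof. by move=> v; apply: cst_continuous. Qed.
Lemma contf_plus f g : contf f -> contf g -> contf (fun x => Rplus (f x) (g x)).
Proof. move=> cf cg v.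
have -> : (fun v => Rplus (f (tof v)) (g (tof v))) = ((fun v => f (tof v)) + (fun v => g (tof v)))%R by [].
exact: (@continuousD R R^o _ _ _ v (cf v) (cg v)). Qed.
Lemma contf_mult f g : contf f -> contf g -> contf (fun x => Rmult (f x) (g x)).
Proof. move=> cf cg v.
have -> : (fun v => Rmult (f (tof v)) (g (tof v))) = ((fun v => f (tof v)) \* (fun v => g (tof v)))%R by [].
exact: (continuousM (cf v) (cg v)). Qed.
Lemma contf_minus f g : contf f -> contf g -> contf (fun x => Rminus (f x) (g x)).
Proof. move=> cf cg v.
have -> : (fun v => Rminus (f (tof v)) (g (tof v))) = ((fun v => f (tof v)) - (fun v => g (tof v)))%R by [].
exact: (@continuousB R R^o _ _ _ v (cf v) (cg v)). Qed.
Lemma contf_sumN m (f : nat -> (nat -> R) -> R) :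
  (forall i, contf (f i)) -> contf (fun x => sumN m (fun i => f i x)).
Proof.
move=> cf; elim: m => [|m IH] /=; first exact: contf_cst.
exact: contf_plus.
Qed.

Local Open Scope ring_scope.
Local Open Scope classical_set_scope.
Lemma box_max (h : (nat -> R) -> R) (B : R) : contf h -> Rle 0 B ->
  (forall x y, (forall i, (i <= n)%coq_nat -> x i = y i) -> h x = h y) ->
  exists c : nat -> R, (forall i, (i <= n)%coq_nat -> Rle (Rabs (c i)) B) /\
   (forall x, (forall i, (i <= n)%coq_nat -> Rle (Rabs (x i)) B) -> Rle (h x) (h c)).
Proof.
move=> ch B0 hloc.
have memI x : (`[(- B)%R, B]%classic : set R) x <-> (Rle (- B) x /\ Rle x B).
  rewrite /= in_itv /=; split.
    by move=> /andP [/RleP h1 /RleP h2].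
  by move=> [h1 h2]; apply/andP; split; apply/RleP.
pose A := [set v : 'rV[R]_n.+1 | forall i, (`[(- B)%R, B]%classic : set R) (v ord0 i)].
have cA : compact A.
  by apply: (@rV_compact _ _ (fun=> `[(- B)%R, B]%classic)) => _; apply: segment_compact.
have A0 : A !=set0.
  exists 0%R => i; apply/memI; rewrite mxE; change (GRing.zero : R) with R0; split; lra.
have [c cA' cmax] := EVT_max_rV A0 cA (continuous_subspaceT ch).
have inA x : (forall i, (i <= n)%coq_nat -> Rle (Rabs (x i)) B) ->
   (\row_(j < n.+1) x j) \in A.
  move=> hx; rewrite inE => i; apply/memI; rewrite mxE.
  have := hx i (proj1 (Nat.lt_succ_r _ _) (ltP (ltn_ord i))) => hxi.
  have h1 := Rle_abs (x i); have h2 := Rle_abs (- x i); rewrite Rabs_Ropp in h2.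
  split; lra.
exists (tof c); split.
  move=> i hi; rewrite inE in cA'; have /memI [h1 h2] := cA' (inord i).
  rewrite /tof; apply: Rabs_le; lra.
move=> x hx.
have -> : h x = h (tof (\row_(j < n.+1) x j)).
  apply: hloc => i hi; rewrite /tof mxE inordK //; exact/ltP/Nat.lt_succ_r.
apply/RleP; exact: cmax (inA x hx).
Qed.
End S.
End MC.


Lemma sumN_ext N f g : (forall i, (i < N)%nat -> f i = g i) -> sumN N f = sumN N g.
Proof.
  induction N; intros H; simpl; auto.
  rewrite IHN by (intros; apply H; lia). rewrite H by lia. reflexivity.
Qed.

Lemma sumN_plus N f g : sumN N (fun i => f i + g i) = sumN N f + sumN N g.
Proof. induction N; simpl; [lra| rewrite IHN; lra]. Qed.

Lemma sumN_minus N f g : sumN N (fun i => f i - g i) = sumN N f - sumN N g.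
Proof. induction N; simpl; [lra| rewrite IHN; lra]. Qed.

Lemma sumN_scal N c f : sumN N (fun i => c * f i) = c * sumN N f.
Proof. induction N; simpl; [lra| rewrite IHN; lra]. Qed.

Lemma sumN_scal_r N c f : sumN N (fun i => f i * c) = sumN N f * c.
Proof. induction N; simpl; [lra| rewrite IHN; lra]. Qed.

Lemma sumN_0 N : sumN N (fun _ => 0) = 0.
Proof. induction N; simpl; [lra| rewrite IHN; lra]. Qed.
Lemma sumN_zero N f : (forall i, (i < N)%nat -> f i = 0) -> sumN N f = 0.
Proof. intros H. rewrite (sumN_ext N f (fun _ => 0)) by auto. apply sumN_0. Qed.

Lemma sumN_swap N M (f : nat -> nat -> R) :
  sumN N (fun i => sumN M (fun j => f i j)) = sumN M (fun j => sumN N (fun i => f i j)).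
Proof.
  induction N; simpl.
  - symmetry; apply sumN_zero; auto.
  - rewrite IHN. rewrite <- sumN_plus. reflexivity.
Qed.

Lemma sumN_nonneg N f : (forall i, (i < N)%nat -> 0 <= f i) -> 0 <= sumN N f.
Proof. induction N; intros H; simpl; [lra|]. assert (0 <= f N) by (apply H; lia).
  assert (0 <= sumN N f) by (apply IHN; intros; apply H; lia). lra. Qed.

Lemma sumN_le N f g : (forall i, (i < N)%nat -> f i <= g i) -> sumN N f <= sumN N g.
Proof. induction N; intros H; simpl; [lra|]. assert (f N <= g N) by (apply H; lia).
  assert (sumN N f <= sumN N g) by (apply IHN; intros; apply H; lia). lra. Qed.

Lemma sumN_ge_term N f k : (forall i, (i < N)%nat -> 0 <= f i) -> (k < N)%nat -> f k <= sumN N f.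
Proof.
  induction N; intros H Hk; [lia|]. simpl.
  destruct (Nat.eq_dec k N) as [->|Hne].
  - assert (0 <= sumN N f) by (apply sumN_nonneg; intros; apply H; lia). lra.
  - assert (f k <= sumN N f) by (apply IHN; [intros; apply H; lia | lia]).
    assert (0 <= f N) by (apply H; lia). lra.
Qed.

Lemma sumN_sq_zero N f : sumN N (fun i => f i * f i) = 0 -> forall i, (i < N)%nat -> f i = 0.
Proof.
  intros H i Hi.
  assert (f i * f i <= sumN N (fun i => f i * f i)).
  { apply (sumN_ge_term N (fun i => f i * f i)); auto. intros; nra. }
  nra.
Qed.

Lemma sumN_delta_out N k f : (N <= k)%nat -> sumN N (fun j => if Nat.eq_dec k j then f j else 0) = 0.
Proof. intros H. apply sumN_zero. intros i Hi. destruct (Nat.eq_dec k i); [lia|auto]. Qed.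

Lemma sumN_delta N k f : (k < N)%nat -> sumN N (fun j => if Nat.eq_dec k j then f j else 0) = f k.
Proof.
  induction N; intros H; [lia|]. simpl.
  destruct (Nat.eq_dec k N) as [->|Hne].
  - rewrite sumN_delta_out by lia. lra.
  - rewrite IHN by lia. lra.
Qed.


Definition dot N (x y : nat -> R) := sumN N (fun i => x i * y i).
Definition bil N M (x y : nat -> R) := sumN N (fun i => x i * mat_vec N M y i).
Definition symm N (M : nat -> nat -> R) := forall i j, (i < N)%nat -> (j < N)%nat -> M i j = M j i.

Lemma mv_lin N M x w t i :
  mat_vec N M (fun j => x j + t * w j) i = mat_vec N M x i + t * mat_vec N M w i.
Proof.
  unfold mat_vec. rewrite <- sumN_scal, <- sumN_plus. apply sumN_ext; intros; ring.
Qed.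

Lemma sumN_lin3 N f g h a b :
  sumN N (fun i => f i + a * g i + b * h i) = sumN N f + a * sumN N g + b * sumN N h.
Proof. induction N; simpl; [ring| rewrite IHN; ring]. Qed.

Lemma bil_expand N M x w t :
  bil N M (fun j => x j + t * w j) (fun j => x j + t * w j) =
  bil N M x x + t * (bil N M w x + bil N M x w) + t^2 * bil N M w w.
Proof.
  replace (bil N M w x + bil N M x w) with
    (sumN N (fun i => w i * mat_vec N M x i + x i * mat_vec N M w i))
    by (unfold bil; rewrite sumN_plus; reflexivity).
  unfold bil. rewrite <- sumN_lin3.
  apply sumN_ext; intros i _. rewrite mv_lin. ring.
Qed.

Lemma dot_expand N x w t :
  dot N (fun j => x j + t * w j) (fun j => x j + t * w j) =
  dot N x x + t * (2 * dot N x w) + t^2 * dot N w w.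
Proof.
  unfold dot. rewrite <- sumN_scal. rewrite <- sumN_lin3.
  apply sumN_ext; intros i _. ring.
Qed.

Lemma bil_sym N M x y : symm N M -> bil N M x y = bil N M y x.
Proof.
  intros HS. unfold bil, mat_vec.
  transitivity (sumN N (fun i => sumN N (fun j => x i * M i j * y j))).
  { apply sumN_ext; intros i _. rewrite <- sumN_scal. apply sumN_ext; intros; ring. }
  rewrite sumN_swap.
  apply sumN_ext; intros j Hj. rewrite <- sumN_scal. apply sumN_ext; intros i Hi.
  rewrite (HS i j) by auto. ring.
Qed.

Lemma dot_nonneg N x : 0 <= dot N x x.
Proof. apply sumN_nonneg; intros; nra. Qed.

Lemma dot_term N x i : (i < N)%nat -> x i * x i <= dot N x x.
Proof. intros. apply (sumN_ge_term N (fun i => x i * x i)); auto. intros; nra. Qed.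

Lemma dot_pos N x i : (i < N)%nat -> x i <> 0 -> 0 < dot N x x.
Proof. intros Hi Hx. pose proof (dot_term N x i Hi). assert (0 < x i * x i) by nra. lra. Qed.

Lemma poly_lead a b c d :
  (forall t, a * t + b * t^2 + c * t^3 + d * t^4 <= 0) -> a <= 0.
Proof.
  intros H. destruct (Rle_dec a 0) as [|Ha]; auto. exfalso.
  set (C := Rabs b + Rabs c + Rabs d + 1).
  assert (HC : 1 <= C) by (unfold C; pose proof (Rabs_pos b); pose proof (Rabs_pos c); pose proof (Rabs_pos d); lra).
  set (t := Rmin 1 (a / (2 * C))).
  assert (Ht0 : 0 < t). { unfold t. apply Rmin_pos; [lra|]. apply Rdiv_lt_0_compat; lra. }
  assert (Ht1 : t <= 1) by (unfold t; apply Rmin_l).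
  assert (Ht2 : t <= a / (2 * C)) by (unfold t; apply Rmin_r).
  assert (HtC : t * C <= a / 2).
  { apply Rmult_le_compat_r with (r := C) in Ht2; [|lra].
    replace (a / (2 * C) * C) with (a / 2) in Ht2 by (field; lra). lra. }
  specialize (H t).
  assert (Hb : b * t^2 >= - (Rabs b) * t^2).
  { pose proof (Rle_abs (-b)). rewrite Rabs_Ropp in H0. assert (0 <= t^2) by nra. nra. }
  assert (Hc : c * t^3 >= - (Rabs c) * t^2).
  { pose proof (Rle_abs (-c)). rewrite Rabs_Ropp in H0.
    assert (0 <= t^3 <= t^2).
    { replace (t^3) with (t^2 * t) by ring. assert (0 < t^2) by (apply pow_lt; lra). split; nra. }
    pose proof (Rabs_pos c). nra. }
  assert (Hd : d * t^4 >= - (Rabs d) * t^2).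
  { pose proof (Rle_abs (-d)). rewrite Rabs_Ropp in H0.
    assert (0 <= t^4 <= t^2).
    { replace (t^4) with (t^2 * (t * t)) by ring. assert (0 < t^2) by (apply pow_lt; lra).
      assert (0 <= t * t <= 1) by (split; nra). split; nra. }
    pose proof (Rabs_pos d). nra. }
  assert (a * t - C * t^2 > 0).
  { replace (a * t - C * t^2) with (t * (a - t * C)) by ring. nra. }
  assert (C * t^2 = Rabs b * t^2 + Rabs c * t^2 + Rabs d * t^2 + t^2) by (unfold C; ring).
  assert (0 < t^2) by (apply pow_lt; lra).
  lra.
Qed.

Lemma poly_lead0 a b c d :
  (forall t, a * t + b * t^2 + c * t^3 + d * t^4 <= 0) -> a = 0.
Proof.
  intros H. apply Rle_antisym.
  - eapply poly_lead; eauto.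
  - assert (- a <= 0); [|lra].
    apply (poly_lead (-a) b (-c) d). intros t. specialize (H (-t)).
    replace (- a * t + b * t ^ 2 + - c * t ^ 3 + d * t ^ 4) with
      (a * - t + b * (- t) ^ 2 + c * (- t) ^ 3 + d * (- t) ^ 4) by ring. auto.
Qed.


Lemma bil_ext N M x y : (forall i, (i < N)%nat -> x i = y i) -> bil N M x x = bil N M y y.
Proof.
  intros H. unfold bil, mat_vec. apply sumN_ext; intros i Hi. rewrite H by auto. f_equal.
  apply sumN_ext; intros j Hj. rewrite H by auto. reflexivity.
Qed.
Lemma dot_ext N x y : (forall i, (i < N)%nat -> x i = y i) -> dot N x x = dot N y y.
Proof. intros H. unfold dot. apply sumN_ext; intros i Hi. rewrite H by auto. reflexivity. Qed.

Lemma bil_bound N M x :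
  bil N M x x <= sumN N (fun i => sumN N (fun j => Rabs (M i j))) * dot N x x.
Proof.
  unfold bil, mat_vec. rewrite <- sumN_scal_r. apply sumN_le; intros i Hi.
  rewrite <- sumN_scal, <- sumN_scal_r. apply sumN_le; intros j Hj.
  pose proof (dot_term N x i Hi). pose proof (dot_term N x j Hj).
  assert (Hxy : Rabs (x i) * Rabs (x j) <= dot N x x).
  { assert (Rabs (x i) * Rabs (x i) = x i * x i) by (rewrite <- Rabs_mult; apply Rabs_right; nra).
    assert (Rabs (x j) * Rabs (x j) = x j * x j) by (rewrite <- Rabs_mult; apply Rabs_right; nra).
    nra. }
  assert (x i * (M i j * x j) <= Rabs (x i * (M i j * x j))) by apply Rle_abs.
  rewrite !Rabs_mult in H1.
  pose proof (Rabs_pos (M i j)). pose proof (Rabs_pos (x i)). pose proof (Rabs_pos (x j)).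
  nra.
Qed.

Definition gfun N M al (x : nat -> R) := bil N M x x - al * (dot N x x * dot N x x).

Lemma gfun_cont n M al : MC.contf n (gfun (S n) M al).
Proof.
  unfold gfun, bil, dot, mat_vec.
  apply MC.contf_minus.
  - apply (MC.contf_sumN n (S n) (fun i x => x i * sumN (S n) (fun j => M i j * x j))).
    intros i. apply MC.contf_mult; [apply MC.contf_coord|].
    apply (MC.contf_sumN n (S n) (fun j x => M i j * x j)). intros j.
    apply MC.contf_mult; [apply MC.contf_cst|apply MC.contf_coord].
  - apply MC.contf_mult; [apply MC.contf_cst|].
    apply MC.contf_mult;
    apply (MC.contf_sumN n (S n) (fun i x => x i * x i)); intros i;
    apply MC.contf_mult; apply MC.contf_coord.
Qed.

Lemma sumN_abs_term N f k : (k < N)%nat -> Rabs (f k) <= sumN N (fun i => Rabs (f i)).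
Proof. intros. apply (sumN_ge_term N (fun i => Rabs (f i))); auto. intros; apply Rabs_pos. Qed.

Lemma pos_eig n M y : symm (S n) M -> bil (S n) M y y > 0 ->
  exists c lam, 0 < lam /\ (exists i, (i < S n)%nat /\ c i <> 0) /\
    forall i, (i < S n)%nat -> mat_vec (S n) M c i = lam * c i.
Proof.
  intros HS Hy. set (N := S n).
  set (dy := dot N y y).
  assert (Hdy : 0 < dy).
  { destruct (classic (exists i, (i < N)%nat /\ y i <> 0)) as [[i [Hi Hyi]]|Hno].
    - apply (dot_pos N y i Hi Hyi).
    - exfalso. assert (bil N M y y = bil N M (fun _ => 0) (fun _ => 0)).
      { apply bil_ext. intros i Hi. destruct (Req_dec (y i) 0); auto. exfalso; apply Hno; eauto. }
      unfold bil at 2, mat_vec in H. rewrite sumN_zero in H by (intros; ring). fold N in Hy. lra. }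
  set (Q := bil N M y y).
  assert (HQ : 0 < Q) by (unfold Q, N; lra).
  set (al := Q / (2 * (dy * dy))).
  assert (Hal : 0 < al) by (unfold al; apply Rdiv_lt_0_compat; [unfold Q; fold N in Hy; lra| nra]).
  assert (Hgy : gfun N M al y = Q / 2).
  { unfold gfun, al. fold dy Q. field. lra. }
  set (S0 := sumN N (fun i => sumN N (fun j => Rabs (M i j)))).
  assert (HS0 : 0 <= S0) by (apply sumN_nonneg; intros; apply sumN_nonneg; intros; apply Rabs_pos).
  set (B := S0 / al + 1 + sumN N (fun i => Rabs (y i))).
  assert (HSy : 0 <= sumN N (fun i => Rabs (y i))) by (apply sumN_nonneg; intros; apply Rabs_pos).
  assert (HSal : 0 <= S0 / al) by (unfold Rdiv; apply Rmult_le_pos; [lra| left; apply Rinv_0_lt_compat; lra]).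
  assert (HB1 : 1 <= B) by (unfold B; lra).
  assert (hloc : forall x z, (forall i, (i <= n)%nat -> x i = z i) -> gfun N M al x = gfun N M al z).
  { intros x z H. unfold gfun. rewrite (bil_ext N M x z), (dot_ext N x z); auto; intros; apply H; unfold N in *; lia. }
  destruct (MC.box_max n (gfun N M al) B (gfun_cont n M al) ltac:(lra) hloc) as [c [Hcbox Hcmax]].
  assert (Hyb : gfun N M al y <= gfun N M al c).
  { apply Hcmax. intros i Hi. pose proof (sumN_abs_term N y i ltac:(unfold N; lia)). unfold B. lra. }
  assert (Hglob : forall x, gfun N M al x <= gfun N M al c).
  { intros x. destruct (classic (forall i, (i <= n)%nat -> Rabs (x i) <= B)) as [Hin|Hout].
    - apply Hcmax; auto.
    - apply not_all_ex_not in Hout. destruct Hout as [i Hi].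
      apply imply_to_and in Hi. destruct Hi as [Hi Hxi]. apply Rnot_le_lt in Hxi.
      pose proof (dot_term N x i ltac:(unfold N; lia)).
      assert (Rabs (x i) * Rabs (x i) = x i * x i) by (rewrite <- Rabs_mult; apply Rabs_right; nra).
      set (s := dot N x x) in *.
      assert (HB2 : B * B < Rabs (x i) * Rabs (x i)) by (apply Rmult_le_0_lt_compat; lra).
      assert (B <= B * B) by nra.
      assert (S0 / al < B) by (unfold B; lra).
      assert (Hs : S0 / al < s) by lra.
      assert (al * s > S0).
      { apply Rmult_lt_compat_l with (r := al) in Hs; auto.
        replace (al * (S0 / al)) with S0 in Hs by (field; lra). lra. }
      pose proof (bil_bound N M x) as Hbb. fold S0 s in Hbb.
      assert (0 < s) by lra.
      assert (S0 * s < (al * s) * s) by (apply Rmult_lt_compat_r; lra).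
      assert (gfun N M al x < 0). { unfold gfun. fold s. lra. }
      assert (0 < Q) by (unfold Q, N; lra). lra. }
  assert (Hstat : forall w, bil N M w c = 2 * al * dot N c c * dot N c w).
  { intros w.
    set (nc := dot N c c). set (d := dot N c w). set (e := dot N w w).
    set (bw := bil N M w c). set (q := bil N M w w).
    assert (bil N M c w = bw) by (unfold bw; apply bil_sym; auto).
    assert (Ha : 2 * bw - 4 * al * nc * d = 0).
    { apply (poly_lead0 _ (q - al * (4 * d * d + 2 * nc * e)) (- al * 4 * d * e) (- al * e * e)).
      intros t. pose proof (Hglob (fun j => c j + t * w j)). unfold gfun in H0.
      rewrite bil_expand, dot_expand in H0. fold nc d e bw q in H0. rewrite H in H0.
      replace (2 * bw - 4 * al * nc * d) with (2 * bw - 4 * al * nc * d) by ring.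
      assert (Hexp : bil N M c c + t * (bw + bw) + t ^ 2 * q - al * ((nc + t * (2 * d) + t ^ 2 * e) * (nc + t * (2 * d) + t ^ 2 * e)) - (bil N M c c - al * (nc * nc)) =
        (2 * bw - 4 * al * nc * d) * t + (q - al * (4 * d * d + 2 * nc * e)) * t ^ 2 + (- al * 4 * d * e) * t ^ 3 + (- al * e * e) * t ^ 4) by ring.
      fold nc in H0. lra. }
    lra. }
  set (lam := 2 * al * dot N c c).
  assert (Hcnz : exists i, (i < N)%nat /\ c i <> 0).
  { destruct (classic (exists i, (i < N)%nat /\ c i <> 0)) as [|Hno]; auto. exfalso.
    assert (Hz : gfun N M al c = gfun N M al (fun _ => 0)).
    { apply hloc. intros i Hi. destruct (Req_dec (c i) 0); auto. exfalso; apply Hno. exists i. split; auto. unfold N; lia. }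
    unfold gfun at 2, bil, dot, mat_vec in Hz. rewrite !sumN_zero in Hz by (intros; ring).
    lra. }
  destruct Hcnz as [i0 [Hi0 Hci0]].
  exists c, lam. split; [|split].
  - unfold lam. pose proof (dot_pos N c i0 Hi0 Hci0). nra.
  - exists i0; auto.
  - set (w := fun i => mat_vec N M c i - lam * c i).
    assert (dot N w w = 0).
    { pose proof (Hstat w). fold lam in H.
      assert (bil N M w c - lam * dot N c w = dot N w w).
      { unfold bil, dot. rewrite <- sumN_scal, <- sumN_minus. apply sumN_ext; intros; unfold w; ring. }
      rewrite <- H0. rewrite H. ring. }
    intros i Hi. pose proof (sumN_sq_zero N w H i Hi). unfold w in H0. lra.
Qed.


Lemma mv_const N M v k i : (forall j, (j < N)%nat -> v j = k) ->
  mat_vec N M v i = k * mat_vec N M (fun _ => 1) i.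
Proof. intros H. unfold mat_vec. rewrite <- sumN_scal. apply sumN_ext; intros j Hj. rewrite H by auto. ring. Qed.

Lemma negdef N M : (1 <= N)%nat -> symm N M ->
  (forall i, (i < N)%nat -> mat_vec N M (fun _ => 1) i = 0) ->
  (forall lambda v, eigenpair N M lambda v -> ~ constant_vec N v -> lambda < 0) ->
  (forall x, bil N M x x <= 0) /\ (forall x, ~ constant_vec N x -> bil N M x x < 0).
Proof.
  intros HN HS Hrow Hst.
  assert (Hle : forall x, bil N M x x <= 0).
  { intros x. destruct (Rle_dec (bil N M x x) 0) as [|Hgt]; auto. exfalso.
    apply Rnot_le_lt in Hgt. destruct N as [|n]; [lia|].
    destruct (pos_eig n M x HS Hgt) as [c [lam [Hlam [[i0 [Hi0 Hc0]] Hev]]]].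
    assert (lam < 0).
    { apply (Hst lam c).
      - split; [exists i0; auto | auto].
      - intros [k Hk]. apply Hc0. rewrite Hk by auto.
        pose proof (Hev i0 Hi0). rewrite (mv_const _ M c k) in H by auto.
        rewrite Hrow in H by auto. rewrite Hk in H by auto.
        assert (lam * k = 0) by lra. apply Rmult_integral in H0. destruct H0; lra. }
    lra. }
  split; auto.
  intros x Hnc. destruct (Rle_lt_or_eq_dec _ _ (Hle x)) as [|Heq]; auto. exfalso.
  (* x maximizes Q, so M x = 0 *)
  assert (Hb : forall w, bil N M w x = 0).
  { intros w.
    assert (H2 : 2 * bil N M w x = 0).
    { apply (poly_lead0 _ (bil N M w w) 0 0). intros t.
      pose proof (Hle (fun j => x j + t * w j)). rewrite bil_expand in H.
      rewrite (bil_sym N M x w HS) in H. rewrite Heq in H. lra. }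
    lra. }
  set (w := fun i => mat_vec N M x i).
  assert (Hw : dot N w w = 0) by (rewrite <- (Hb w); reflexivity).
  assert (0 < 0).
  { apply (Hst 0 x).
    - split.
      + destruct (classic (exists i, (i < N)%nat /\ x i <> 0)) as [|Hno]; auto.
        exfalso. apply Hnc. exists 0. intros i Hi. destruct (Req_dec (x i) 0); auto.
        exfalso; apply Hno; eauto.
      + intros i Hi. pose proof (sumN_sq_zero N w Hw i Hi). unfold w in H. rewrite H. ring.
    - auto. }
  lra.
Qed.


Lemma cos_swap a b : cos (a - b) = cos (b - a).
Proof. replace (a - b) with (- (b - a)) by ring. apply cos_neg. Qed.
Lemma sin_anti a b : sin (a - b) = - sin (b - a).
Proof. replace (a - b) with (- (b - a)) by ring. apply sin_neg. Qed.

Lemma jac_symm N A K th : adjacency N A -> symm N (jacobian N A K th).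
Proof.
  intros [_ [HA _]] i j Hi Hj. unfold jacobian.
  destruct (Nat.eq_dec i j), (Nat.eq_dec j i); subst; try lia; try reflexivity.
  rewrite (HA i j Hi Hj), cos_swap. reflexivity.
Qed.

Lemma jac_mv N A K th v i : adjacency N A -> (i < N)%nat ->
  mat_vec N (jacobian N A K th) v i = K * sumN N (fun j => A i j * cos (th i - th j) * (v j - v i)).
Proof.
  intros [_ [_ Hd]] Hi. unfold mat_vec.
  transitivity (sumN N (fun j => K * (A i j * cos (th i - th j) * v j) +
     (if Nat.eq_dec i j then (- K * sumN N (fun l => A i l * cos (th i - th l))) * v j else 0))).
  { apply sumN_ext; intros j Hj. unfold jacobian. destruct (Nat.eq_dec i j).
    - subst. rewrite Hd by auto. ring.
    - ring. }
  rewrite sumN_plus, sumN_scal, sumN_delta by auto.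
  replace (sumN N (fun j => A i j * cos (th i - th j) * (v j - v i))) with
    (sumN N (fun j => A i j * cos (th i - th j) * v j) - sumN N (fun j => A i j * cos (th i - th j)) * v i)
    by (rewrite <- sumN_scal_r, <- sumN_minus; apply sumN_ext; intros; ring).
  ring.
Qed.

Lemma jac_row N A K th i : adjacency N A -> (i < N)%nat ->
  mat_vec N (jacobian N A K th) (fun _ => 1) i = 0.
Proof. intros HA Hi. rewrite jac_mv by auto. rewrite sumN_zero by (intros; ring). ring. Qed.

Lemma stable_negdef N A K th : (1 <= N)%nat -> adjacency N A -> stable N A K th ->
  (forall x, bil N (jacobian N A K th) x x <= 0) /\
  (forall x, ~ constant_vec N x -> bil N (jacobian N A K th) x x < 0).
Proof.
  intros HN HA Hst. apply negdef; auto.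
  - apply jac_symm; auto.
  - intros; apply jac_row; auto.
Qed.

Definition ev (k j : nat) : R := if Nat.eq_dec k j then 1 else 0.

Lemma bil_ev N M k : (k < N)%nat -> bil N M (ev k) (ev k) = M k k.
Proof.
  intros Hk. unfold bil.
  transitivity (sumN N (fun i => if Nat.eq_dec k i then mat_vec N M (ev k) i else 0)).
  { apply sumN_ext; intros i Hi. unfold ev. destruct (Nat.eq_dec k i); ring. }
  rewrite sumN_delta by auto. unfold mat_vec.
  transitivity (sumN N (fun j => if Nat.eq_dec k j then M k j else 0)).
  { apply sumN_ext; intros j Hj. unfold ev. destruct (Nat.eq_dec k j); ring. }
  apply sumN_delta; auto.
Qed.

Lemma adj_nonneg N A i j : adjacency N A -> (i < N)%nat -> (j < N)%nat -> 0 <= A i j.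
Proof. intros [H _] Hi Hj. destruct (H i j Hi Hj) as [-> | ->]; lra. Qed.

Lemma deg_sum_pos N A : (2 <= N)%nat -> adjacency N A -> connected N A ->
  0 < sumN N (fun i => degree N A i).
Proof.
  intros HN HA Hc.
  assert (Hr : reach N A 0 1) by (apply Hc; lia).
  inversion Hr as [|i k j Hk Hak Hkj]; subst.
  assert (A 0%nat k <= degree N A 0).
  { unfold degree. apply (sumN_ge_term N (fun j => A 0%nat j)); auto. intros; apply (adj_nonneg N); auto; lia. }
  assert (degree N A 0 <= sumN N (fun i => degree N A i)).
  { apply (sumN_ge_term N (fun i => degree N A i)); [|lia].
    intros; unfold degree; apply sumN_nonneg; intros; apply (adj_nonneg N); auto. }
  lra.
Qed.

Lemma part1 N A K th : (2 <= N)%nat -> adjacency N A -> connected N A -> 0 < K ->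
  stable N A K th -> r_uni N A th > 0.
Proof.
  intros HN HA Hc HK Hst.
  destruct (stable_negdef N A K th ltac:(lia) HA Hst) as [Hle Hlt].
  set (J := jacobian N A K th) in *.
  assert (Hdiag : forall k, (k < N)%nat -> J k k = - K * sumN N (fun l => A k l * cos (th k - th l))).
  { intros k Hk. unfold J, jacobian. destruct (Nat.eq_dec k k); [reflexivity| lia]. }
  assert (H0 : J 0%nat 0%nat < 0).
  { rewrite <- (bil_ev N) by lia. apply Hlt. intros [c Hc0].
    pose proof (Hc0 0%nat ltac:(lia)). pose proof (Hc0 1%nat ltac:(lia)).
    unfold ev in *. simpl in *. lra. }
  assert (Htr : sumN N (fun k => J k k) < 0).
  { assert (- J 0%nat 0%nat <= sumN N (fun k => - J k k)).
    { apply (sumN_ge_term N (fun k => - J k k)); [|lia].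
      intros i Hi. rewrite <- (bil_ev N) by auto. pose proof (Hle (ev i)). lra. }
    replace (sumN N (fun k => - J k k)) with (-1 * sumN N (fun k => J k k)) in H by
      (rewrite <- sumN_scal; apply sumN_ext; intros; ring).
    lra. }
  rewrite (sumN_ext N _ (fun k => - K * sumN N (fun l => A k l * cos (th k - th l)))) in Htr by auto.
  rewrite sumN_scal in Htr.
  unfold r_uni. apply Rmult_lt_0_compat.
  - apply Rinv_0_lt_compat. apply deg_sum_pos; auto.
  - nra.
Qed.


Lemma D_plus f g x a b : derivable_pt_lim f x a -> derivable_pt_lim g x b ->
  derivable_pt_lim (fun k => f k + g k) x (a + b).
Proof. intros; exact (derivable_pt_lim_plus f g x a b H H0). Qed.
Lemma D_minus f g x a b : derivable_pt_lim f x a -> derivable_pt_lim g x b ->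
  derivable_pt_lim (fun k => f k - g k) x (a - b).
Proof. intros; exact (derivable_pt_lim_minus f g x a b H H0). Qed.
Lemma D_mult f g x a b : derivable_pt_lim f x a -> derivable_pt_lim g x b ->
  derivable_pt_lim (fun k => f k * g k) x (a * g x + f x * b).
Proof. intros; exact (derivable_pt_lim_mult f g x a b H H0). Qed.
Lemma D_const c x : derivable_pt_lim (fun _ => c) x 0.
Proof. exact (derivable_pt_lim_const c x). Qed.
Lemma D_id x : derivable_pt_lim (fun k => k) x 1.
Proof. exact (derivable_pt_lim_id x). Qed.
Lemma D_scal c f x a : derivable_pt_lim f x a -> derivable_pt_lim (fun k => c * f k) x (c * a).
Proof.
  intros H. pose proof (D_mult (fun _ => c) f x 0 a (D_const c x) H).
  replace (c * a) with (0 * f x + c * a) by ring. auto.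
Qed.
Lemma D_cos f x a : derivable_pt_lim f x a ->
  derivable_pt_lim (fun k => cos (f k)) x (- sin (f x) * a).
Proof. intros H. exact (derivable_pt_lim_comp f cos x a _ H (derivable_pt_lim_cos (f x))). Qed.
Lemma D_sin f x a : derivable_pt_lim f x a ->
  derivable_pt_lim (fun k => sin (f k)) x (cos (f x) * a).
Proof. intros H. exact (derivable_pt_lim_comp f sin x a _ H (derivable_pt_lim_sin (f x))). Qed.
Lemma D_sumN n (f : nat -> R -> R) d x : (forall j, (j < n)%nat -> derivable_pt_lim (f j) x (d j)) ->
  derivable_pt_lim (fun k => sumN n (fun j => f j k)) x (sumN n d).
Proof.
  induction n; intros H; simpl.
  - apply D_const.
  - apply D_plus; [apply IHn; intros; apply H; lia| apply H; lia].
Qed.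

Lemma deriv_loc_const f x l eps : 0 < eps -> (forall k, Rabs (k - x) < eps -> f k = f x) ->
  derivable_pt_lim f x l -> l = 0.
Proof.
  intros He Hc Hd. destruct (Req_dec l 0) as [|Hl]; auto. exfalso.
  destruct (Hd (Rabs l) (Rabs_pos_lt l Hl)) as [d Hdd].
  pose proof (cond_pos d) as Hdp.
  set (h := Rmin d eps / 2).
  assert (Hh0 : 0 < h) by (unfold h; pose proof (Rmin_pos d eps Hdp He); lra).
  assert (Hh1 : h < d) by (unfold h; pose proof (Rmin_l d eps); lra).
  assert (Hh2 : h < eps) by (unfold h; pose proof (Rmin_r d eps); lra).
  specialize (Hdd h ltac:(lra) ltac:(rewrite Rabs_right; lra)).
  rewrite (Hc (x + h)) in Hdd by (replace (x + h - x) with h by ring; rewrite Rabs_right; lra).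
  replace ((f x - f x) / h - l) with (- l) in Hdd by (field; lra).
  rewrite Rabs_Ropp in Hdd. lra.
Qed.

Lemma interval_nbhd lo hi K : in_interval lo hi K ->
  exists eps, 0 < eps /\ forall k, Rabs (k - K) < eps -> in_interval lo hi k.
Proof.
  intros [H1 H2]. destruct hi as [h|].
  - exists (Rmin (K - lo) (h - K)). split; [apply Rmin_pos; lra|].
    intros k Hk. pose proof (Rmin_l (K - lo) (h - K)). pose proof (Rmin_r (K - lo) (h - K)).
    apply Rabs_def2 in Hk. split; lra.
  - exists (K - lo). split; [lra|]. intros k Hk. apply Rabs_def2 in Hk. split; [lra|exact I].
Qed.

Lemma interval_convex lo hi K1 K2 c : in_interval lo hi K1 -> in_interval lo hi K2 ->
  K1 <= c <= K2 -> in_interval lo hi c.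
Proof.
  intros [H1 H2] [H3 H4] Hc. split; [lra|]. destruct hi; auto. lra.
Qed.


Definition Fi N A (th : nat -> R) i := sumN N (fun j => A i j * sin (th j - th i)).
Definition Fp N A (th dth : nat -> R) i := sumN N (fun j => A i j * (cos (th j - th i) * (dth j - dth i))).
Definition Xp N A (th dth : nat -> R) :=
  sumN N (fun i => sumN N (fun j => A i j * (- sin (th i - th j) * (dth i - dth j)))).

Lemma Xp_eq N A th dth : adjacency N A ->
  Xp N A th dth = 2 * sumN N (fun i => dth i * Fi N A th i).
Proof.
  intros [_ [HA _]]. unfold Xp.
  transitivity (sumN N (fun i => sumN N (fun j => A i j * sin (th j - th i) * dth i)) -
                sumN N (fun i => sumN N (fun j => A i j * sin (th j - th i) * dth j))).
  { rewrite <- sumN_minus. apply sumN_ext; intros i Hi. rewrite <- sumN_minus.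
    apply sumN_ext; intros j Hj. rewrite sin_anti. ring. }
  rewrite (sumN_swap N N (fun i j => A i j * sin (th j - th i) * dth j)).
  replace (sumN N (fun i => sumN N (fun j => A i j * sin (th j - th i) * dth i)))
    with (sumN N (fun i => dth i * Fi N A th i))
    by (apply sumN_ext; intros i Hi; unfold Fi; rewrite <- sumN_scal; apply sumN_ext; intros; ring).
  replace (sumN N (fun j => sumN N (fun i => A i j * sin (th j - th i) * dth j)))
    with (- sumN N (fun j => dth j * Fi N A th j)).
  { ring. }
  rewrite <- (Rmult_1_l (sumN N (fun j => dth j * Fi N A th j))).
  rewrite Ropp_mult_distr_l, <- sumN_scal.
  apply sumN_ext; intros j Hj. unfold Fi. rewrite <- !sumN_scal.
  apply sumN_ext; intros i Hi. rewrite (HA i j Hi Hj), (sin_anti (th j)). ring.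
Qed.

Lemma bil_eq N A K th dth : adjacency N A ->
  (forall i, (i < N)%nat -> Fi N A th i + K * Fp N A th dth i = 0) ->
  bil N (jacobian N A K th) dth dth = - sumN N (fun i => dth i * Fi N A th i).
Proof.
  intros HA HF. unfold bil.
  rewrite <- (Rmult_1_l (sumN N (fun i => dth i * Fi N A th i))).
  rewrite Ropp_mult_distr_l, <- sumN_scal.
  apply sumN_ext; intros i Hi. rewrite jac_mv by auto.
  assert (K * Fp N A th dth i = - Fi N A th i) by (pose proof (HF i Hi); lra).
  replace (K * sumN N (fun j => A i j * cos (th i - th j) * (dth j - dth i))) with (K * Fp N A th dth i).
  { rewrite H. ring. }
  unfold Fp. f_equal. apply sumN_ext; intros j Hj. rewrite (cos_swap (th j) (th i)). ring.
Qed.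


Section P2.
Variables (N : nat) (A : nat -> nat -> R) (omega : nat -> R).
Variables (lo : R) (hi : option R) (theta : R -> nat -> R) (dtheta : nat -> R -> R).
Hypothesis HN : (2 <= N)%nat.
Hypothesis HA : adjacency N A.
Hypothesis Hc : connected N A.
Hypothesis Hlo : 0 <= lo.
Hypothesis Hder : forall i K, (i < N)%nat -> in_interval lo hi K ->
  derivable_pt_lim (fun k => theta k i) K (dtheta i K).
Hypothesis Hss : forall K, in_interval lo hi K -> stable_steady_state N A omega K (theta K).

Let S := sumN N (fun i => degree N A i).
Let dth K := fun i => dtheta i K.

Lemma steady_deriv K i : in_interval lo hi K -> (i < N)%nat ->
  Fi N A (theta K) i + K * Fp N A (theta K) (dth K) i = 0.
Proof.
  intros HK Hi.
  assert (Hd : derivable_pt_lim (fun k => omega i + k * Fi N A (theta k) i) K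
     (0 + (1 * Fi N A (theta K) i + K * Fp N A (theta K) (dth K) i))).
  { apply D_plus; [apply D_const|].
    apply (D_mult (fun k => k) (fun k => Fi N A (theta k) i)); [apply D_id|]. unfold Fi, Fp.
    apply D_sumN. intros j Hj. apply D_scal.
    apply (D_sin (fun k => theta k j - theta k i)).
    apply (D_minus (fun k => theta k j) (fun k => theta k i)); apply Hder; auto. }
  destruct (interval_nbhd lo hi K HK) as [eps [He Hn]].
  assert (0 + (1 * Fi N A (theta K) i + K * Fp N A (theta K) (dth K) i) = 0); [|lra].
  apply (deriv_loc_const (fun k => omega i + k * Fi N A (theta k) i) K _ eps He); auto. intros k Hk.
  destruct (Hss k (Hn k Hk)) as [Hs1 _]. destruct (Hss K HK) as [Hs2 _].
  unfold Fi. rewrite (Hs1 i Hi), (Hs2 i Hi). reflexivity.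
Qed.

Let rp K := / S * Xp N A (theta K) (dth K).

Lemma r_deriv K : in_interval lo hi K ->
  derivable_pt_lim (fun k => r_uni N A (theta k)) K (rp K).
Proof.
  intros HK. unfold r_uni, rp, Xp. fold S. apply D_scal.
  apply D_sumN. intros i Hi. apply D_sumN. intros j Hj.
  apply D_scal. apply (D_cos (fun k => theta k i - theta k j)).
  apply (D_minus (fun k => theta k i) (fun k => theta k j)); apply Hder; auto.
Qed.

Lemma Xp_bil K : in_interval lo hi K ->
  Xp N A (theta K) (dth K) = -2 * bil N (jacobian N A K (theta K)) (dth K) (dth K).
Proof.
  intros HK. rewrite Xp_eq by auto. rewrite bil_eq; auto.
  - ring.
  - intros; apply steady_deriv; auto.
Qed.

Lemma S_pos : 0 < S.
Proof. apply deg_sum_pos; auto. Qed.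

Lemma rp_nonneg K : in_interval lo hi K -> 0 <= rp K.
Proof.
  intros HK. unfold rp. rewrite Xp_bil by auto.
  destruct (Hss K HK) as [_ Hst].
  destruct (stable_negdef N A K (theta K) ltac:(lia) HA Hst) as [Hle _].
  pose proof (Hle (dth K)). pose proof S_pos.
  apply Rmult_le_pos; [left; apply Rinv_0_lt_compat; auto| lra].
Qed.

Lemma rp_pos K : in_interval lo hi K -> (exists i, (i < N)%nat /\ omega i <> 0) -> 0 < rp K.
Proof.
  intros HK [i0 [Hi0 Hw]]. unfold rp. rewrite Xp_bil by auto.
  destruct (Hss K HK) as [Hsteady Hst].
  destruct (stable_negdef N A K (theta K) ltac:(lia) HA Hst) as [_ Hlt].
  assert (HK0 : 0 < K) by (destruct HK; lra).
  assert (Hnc : ~ constant_vec N (dth K)).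
  { intros [c Hcst]. apply Hw.
    pose proof (steady_deriv K i0 HK Hi0) as Hsd.
    assert (Fp N A (theta K) (dth K) i0 = 0).
    { unfold Fp. apply sumN_zero. intros j Hj. rewrite (Hcst j Hj), (Hcst i0 Hi0). ring. }
    pose proof (Hsteady i0 Hi0) as Hs0. unfold Fi in Hsd. rewrite H in Hsd.
    replace (K * 0) with 0 in Hsd by ring. rewrite Rplus_0_r in Hsd. rewrite Hsd in Hs0. lra. }
  pose proof (Hlt _ Hnc). pose proof S_pos.
  apply Rmult_lt_0_compat; [apply Rinv_0_lt_compat; auto| lra].
Qed.

Lemma mono K1 K2 : in_interval lo hi K1 -> in_interval lo hi K2 -> K1 <= K2 ->
  r_uni N A (theta K1) <= r_uni N A (theta K2).
Proof.
  intros H1 H2 H12. destruct (Req_dec K1 K2) as [->|Hne]; [lra|].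
  destruct (MVT_cor2 (fun k => r_uni N A (theta k)) rp K1 K2 ltac:(lra)) as [c [Hm1 Hm2]].
  { intros c0 Hc0. apply r_deriv. apply (interval_convex lo hi K1 K2 c0 H1 H2 Hc0). }
  assert (0 <= rp c) by (apply rp_nonneg; apply (interval_convex lo hi K1 K2 c H1 H2); lra).
  assert (0 <= rp c * (K2 - K1)) by (apply Rmult_le_pos; lra). lra.
Qed.

Lemma smono K1 K2 : (exists i, (i < N)%nat /\ omega i <> 0) ->
  in_interval lo hi K1 -> in_interval lo hi K2 -> K1 < K2 ->
  r_uni N A (theta K1) < r_uni N A (theta K2).
Proof.
  intros Hw H1 H2 H12.
  destruct (MVT_cor2 (fun k => r_uni N A (theta k)) rp K1 K2 H12) as [c [Hm1 Hm2]].
  { intros c0 Hc0. apply r_deriv. apply (interval_convex lo hi K1 K2 c0 H1 H2 Hc0). }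
  assert (0 < rp c) by (apply rp_pos; auto; apply (interval_convex lo hi K1 K2 c H1 H2); lra).
  assert (0 < rp c * (K2 - K1)) by (apply Rmult_lt_0_compat; lra). lra.
Qed.

End P2.


Theorem theorem2 :
  forall (N : nat) (A : nat -> nat -> R) (omega : nat -> R),
    (2 <= N)%nat ->
    adjacency N A ->
    connected N A ->
    sumN N omega = 0 ->
    (* (i) *)
    (forall (K : R) (theta : nat -> R),
        0 < K -> stable_steady_state N A omega K theta ->
        r_uni N A theta > 0)
    /\
    (* (ii) *)
    (forall (lo : R) (hi : option R) (theta : R -> nat -> R),
        0 <= lo ->
        (* continuously differentiable family *)
        (exists dtheta : nat -> R -> R,
            forall i K, (i < N)%nat -> in_interval lo hi K ->
              derivable_pt_lim (fun k => theta k i) K (dtheta i K) /\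
              continuity_pt (dtheta i) K) ->
        (forall K, in_interval lo hi K ->
            stable_steady_state N A omega K (theta K)) ->
        (forall K1 K2, in_interval lo hi K1 -> in_interval lo hi K2 ->
            K1 <= K2 -> r_uni N A (theta K1) <= r_uni N A (theta K2))
        /\
        ((exists i, (i < N)%nat /\ omega i <> 0) ->
          (forall K1 K2, in_interval lo hi K1 -> in_interval lo hi K2 ->
              K1 < K2 -> r_uni N A (theta K1) < r_uni N A (theta K2)) /\
          (forall K, in_interval lo hi K ->
              exists d, derivable_pt_lim (fun k => r_uni N A (theta k)) K d
                        /\ d > 0))).
Proof.
  intros N A omega HN HA Hc _. split.
  - intros K th HK [_ Hst]. apply (part1 N A K th); auto.
  - intros lo hi theta Hlo [dtheta Hd] Hss.
    assert (Hder : forall i K, (i < N)%nat -> in_interval lo hi K ->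
      derivable_pt_lim (fun k => theta k i) K (dtheta i K)) by (intros; apply Hd; auto).
    split.
    + intros; eapply mono; eauto.
    + intros Hw. split.
      * intros; eapply smono; eauto.
      * intros K HK. eexists. split.
        -- apply (r_deriv N A lo hi theta dtheta Hder K HK).
        -- apply (rp_pos N A omega lo hi theta dtheta HN HA Hc Hlo Hder Hss K HK Hw).
Qed.
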